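(* Let $P$ be a rooted forest on $[n]$ whose labeling is natural, let $x_1,\dots,x_n$ be strictly positive reals, and let $x_{\preceq i}=\sum_{j\preceq i}x_j$. Set $$Z_P=\prod_{i=1}^n\frac{x_{\preceq i}}{x_1+\cdots+x_i},\qquad w(\pi)=\prod_{i=1}^{n}\frac{x_1+\cdots+x_i}{x_{\pi_1}+\cdots+x_{\pi_i}}\quad(\pi\in\mathcal{L}(P)).$$ Then $Z_P$ is the partition function of the promotion graph, i.e. $\sum_{\pi\in\mathcal{L}(P)}Z_P\,w(\pi)=1$.
   Context: A rooted tree is a connected finite poset in which each element is covered by at most one element (has at most one successor); a rooted forest is a disjoint union of rooted trees. Natural labeling: $i\prec j$ implies $i<j$. $\mathcal{L}(P)=\{\pi\in S_n : i\prec j \Rightarrow \pi^{-1}_i<\pi^{-1}_j\}$, in one-line notation $\pi=\pi_1\cdots\pi_n$. (The function $w$ is the stationary state of the promotion graph Markov chain normalized by $w(e)=1$.) *)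

(* Defs.v *)
From mathcomp Require Import all_boot all_order all_algebra all_fingroup.
Set Implicit Arguments. Unset Strict Implicit. Unset Printing Implicit Defensive.
Import Order.TTheory GRing.Theory Num.Theory.
Local Open Scope ring_scope.

(* Elements of [n] are represented by 'I_n: ordinal i stands for label i+1. *)

Definition is_partial_order n (le : rel 'I_n) : Prop :=
  [/\ reflexive le, antisymmetric le & transitive le].

Definition strict n (le : rel 'I_n) (i j : 'I_n) : bool := le i j && (i != j).

Definition covers n (le : rel 'I_n) (i j : 'I_n) : bool :=
  strict le i j && [forall k, ~~ (strict le i k && strict le k j)].

Definition rooted_forest n (le : rel 'I_n) : Prop :=
  is_partial_order le /\
  forall i j1 j2 : 'I_n, covers le i j1 -> covers le i j2 -> j1 = j2.

Definition natural_labeling n (le : rel 'I_n) : Prop :=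
  forall i j : 'I_n, strict le i j -> (i < j)%N.

(* linear extensions: pi in one-line notation pi_k = pi k;
   i ≺ j implies pi^{-1}(i) < pi^{-1}(j) *)
Definition linext n (le : rel 'I_n) : {set {perm 'I_n}} :=
  [set pi : {perm 'I_n} | [forall i, forall j,
      strict le i j ==> ((pi^-1)%g i < (pi^-1)%g j)%N]].

Definition xdown (R : pzRingType) n (le : rel 'I_n) (x : 'I_n -> R) (i : 'I_n) : R :=
  \sum_(j | le j i) x j.

(* x_1 + ... + x_i  (i.e. first i+1 labels for ordinal i) *)
Definition xprefix (R : pzRingType) n (x : 'I_n -> R) (i : 'I_n) : R :=
  \sum_(j : 'I_n | (j <= i)%N) x j.

Definition Z_P (R : fieldType) n (le : rel 'I_n) (x : 'I_n -> R) : R :=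
  \prod_(i : 'I_n) (xdown le x i / xprefix x i).

Definition w_pi (R : fieldType) n (x : 'I_n -> R) (pi : {perm 'I_n}) : R :=
  \prod_(i : 'I_n) (xprefix x i / \sum_(k : 'I_n | (k <= i)%N) x (pi k)).

(* Main.v *)
Require Import Defs.
From mathcomp Require Import all_boot all_order all_algebra all_fingroup.
From mathcomp Require Import zify ring lra.
Import Order.TTheory GRing.Theory Num.Theory.
Set Implicit Arguments. Unset Strict Implicit. Unset Printing Implicit Defensive.

Section Order.
Variables (n : nat) (le : rel 'I_n).
Hypothesis (Hf : rooted_forest le) (Hn : natural_labeling le).

Lemma le_refl i : le i i.
Proof. by case: Hf => [[? ? ?] _]. Qed.
Lemma le_trans i j k : le i j -> le j k -> le i k.
Proof. case: Hf => [[_ _ t] _] h1 h2; exact: t h1 h2. Qed.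
Lemma le_anti i j : le i j -> le j i -> i = j.
Proof. case: Hf => [[_ a _] _] h1 h2; apply: a; by rewrite h1 h2. Qed.

Lemma strictE i j : strict le i j = le i j && (i != j).
Proof. by []. Qed.

Lemma cover_exists j a : strict le j a -> exists c, covers le j c && le c a.
Proof.
move=> hja.
have P0 : [pred c | strict le j c && le c a] a by rewrite /= hja le_refl.
case: (arg_minnP (fun c : 'I_n => val c) P0) => c /andP[hjc hca] hmin.
exists c; rewrite hca andbT /covers hjc /=.
apply/forallP => k; apply/negP => /andP[hjk hkc].
have := hmin k; rewrite /= hjk /=.
move: (hkc); rewrite strictE => /andP[hkc' _].
rewrite (le_trans hkc' hca) => /(_ isT).
have := Hn hkc. lia.
Qed.

Lemma chain_aux m (j : 'I_n) : (n - j <= m)%N ->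
  forall a b, le j a -> le j b -> le a b || le b a.
Proof.
elim: m j => [|m IH] j hm a b hja hjb.
  have := ltn_ord j. lia.
case: (eqVneq j a) => [<-|hna]; first by rewrite hjb.
case: (eqVneq j b) => [<-|hnb]; first by rewrite hja orbT.
have sa : strict le j a by rewrite strictE hja hna.
have sb : strict le j b by rewrite strictE hjb hnb.
case: (cover_exists sa) => c /andP[cc hca].
case: (cover_exists sb) => c' /andP[cc' hcb].
have ec : c = c' by case: Hf => _ u; exact: u cc cc'.
subst c'.
have hjc : (j < c)%N by apply: Hn; move: cc; rewrite /covers => /andP[].
apply: (IH c) => //.
have := ltn_ord c. lia.
Qed.

Lemma chain j a b : le j a -> le j b -> le a b || le b a.
Proof. apply: (@chain_aux n j); lia. Qed.

End Order.
Section Max.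
Variables (n : nat) (le : rel 'I_n).
Hypothesis (Hf : rooted_forest le) (Hn : natural_labeling le).

Definition maxA (A : {set 'I_n}) r := (r \in A) && [forall j, (j \in A) ==> ~~ strict le r j].
Definition downset (A : {set 'I_n}) := forall i j, le i j -> j \in A -> i \in A.

Lemma max_exists (A : {set 'I_n}) j : j \in A -> exists r, maxA A r && le j r.
Proof.
move=> hj.
have P0 : [pred r | (r \in A) && le j r] j by rewrite /= hj le_refl.
case: (arg_maxnP (fun c : 'I_n => val c) P0) => r /andP[hr hjr] hmax.
exists r; rewrite hjr andbT /maxA hr /=.
apply/forallP => k; apply/implyP => hk; apply/negP => hrk.
have := hmax k; rewrite /= hk /=.
move: (hrk); rewrite strictE => /andP[hrk' _].
rewrite (le_trans Hf hjr hrk') => /(_ isT).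
have := Hn hrk. lia.
Qed.

Lemma max_unique (A : {set 'I_n}) j r1 r2 : maxA A r1 -> maxA A r2 -> le j r1 -> le j r2 -> r1 = r2.
Proof.
move=> /andP[h1 /forallP m1] /andP[h2 /forallP m2] hj1 hj2.
case/orP: (chain Hf Hn hj1 hj2) => h.
  case: (eqVneq r1 r2) => // ne.
  by have := m1 r2; rewrite h2 /= strictE h ne.
case: (eqVneq r2 r1) => [->//|ne].
by have := m2 r1; rewrite h1 /= strictE h ne.
Qed.

Variables (R : realFieldType) (x : 'I_n -> R).
Local Open Scope ring_scope.
Hypothesis xpos : forall i, 0 < x i.

Lemma sum_max (A : {set 'I_n}) : downset A ->
  \sum_(r | maxA A r) xdown le x r = \sum_(j in A) x j.
Proof.
move=> hA; rewrite /xdown (exchange_big_dep xpredT) //=.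
rewrite [RHS]big_mkcond /=; apply: eq_bigr => j _.
case: (boolP (j \in A)) => hj.
  case: (max_exists hj) => r0 /andP[hm0 hj0].
  apply: (big_pred1 r0) => r /=; apply/idP/idP.
    move=> /andP[hm hjr]; apply/eqP. exact: (max_unique hm hm0 hjr hj0).
  by move=> /eqP ->; rewrite hm0.
apply: big_pred0 => r /=; apply/negP => /andP[/andP[hr _] hjr].
by move: hj; rewrite (hA _ _ hjr hr).
Qed.

Lemma xdown_pos i : 0 < xdown le x i.
Proof.
rewrite /xdown (bigD1 i) ?le_refl //=.
have := xpos i; have : 0 <= \sum_(j | le j i && (j != i)) x j.
  by apply: sumr_ge0 => j _; apply: ltW.
lra.
Qed.

Lemma sumset_pos (A : {set 'I_n}) r : r \in A -> 0 < \sum_(j in A) x j.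
Proof.
move=> hr; rewrite (bigD1 r) //=.
have := xpos r; have : 0 <= \sum_(j in A | j != r) x j.
  by apply: sumr_ge0 => j _; apply: ltW.
lra.
Qed.

End Max.
Section Main.
Variables (n : nat) (le : rel 'I_n).
Hypothesis (Hf : rooted_forest le) (Hn : natural_labeling le).
Local Open Scope ring_scope.
Variables (R : realFieldType) (x : 'I_n -> R).
Hypothesis xpos : forall i, 0 < x i.

Definition G (s : seq 'I_n) : R := \prod_(k < size s) (\sum_(j <- take k.+1 s) x j)^-1.
Fixpoint allseqs m : seq (seq 'I_n) :=
  if m is m'.+1 then [seq rcons s r | s <- allseqs m', r <- index_enum 'I_n] else [:: [::]].
Definition valid (s : seq 'I_n) := pairwise (fun a b => ~~ strict le b a) s.
Definition good (A : {set 'I_n}) s :=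
  [&& uniq s, [forall i, (i \in s) == (i \in A)] & valid s].

Lemma G_rcons s r : G (rcons s r) = G s * (\sum_(j <- rcons s r) x j)^-1.
Proof.
rewrite /G size_rcons big_ord_recr /=; congr (_ * _).
  apply: eq_bigr => k _; rewrite -cats1 takel_cat //; exact: ltn_ord.
by rewrite take_oversize ?size_rcons.
Qed.

Lemma good_rcons A s r : good A (rcons s r) = maxA le A r && good (A :\ r) s.
Proof.
rewrite /good rcons_uniq /valid pairwise_rcons.
apply/idP/idP.
  move=> /and3P[/andP[rn us] /forallP hm /andP[ha ps]].
  have hr : r \in A by have := hm r; rewrite mem_rcons in_cons eqxx /= => /eqP <-.
  rewrite /maxA hr us ps /= andbT; apply/andP; split.
    apply/forallP => j; apply/implyP => hj.
    have := hm j; rewrite mem_rcons in_cons hj => /eqP /orP[/eqP ->|hjs].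
      by rewrite strictE eqxx andbF.
    exact: (allP ha j hjs).
  apply/forallP => i; rewrite in_setD1.
  have := hm i; rewrite mem_rcons in_cons => /eqP <-.
  by case: (eqVneq i r) => [->|] /=; [rewrite (negbTE rn)|].
move=> /andP[/andP[hr /forallP hmax] /and3P[us /forallP hm ps]].
have rn : r \notin s by have := hm r; rewrite in_setD1 eqxx /= => /eqP ->.
rewrite rn us ps /= andbT; apply/andP; split.
  apply/forallP => i; rewrite mem_rcons in_cons.
  have := hm i; rewrite in_setD1 => /eqP ->.
  by case: (eqVneq i r) => [->|] /=; rewrite ?hr.
apply/allP => j hj.
have := hm j; rewrite hj in_setD1 => /eqP /esym /andP[_ hjA].
exact: (implyP (hmax j) hjA).
Qed.

Lemma downset_D1 A r : downset le A -> maxA le A r -> downset le (A :\ r).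
Proof.
move=> hA /andP[hr /forallP hm] i j hij; rewrite !in_setD1 => /andP[hjr hj].
rewrite (hA _ _ hij hj) andbT; apply/eqP => eir; subst i.
by have := implyP (hm j) hj; rewrite strictE hij eq_sym hjr.
Qed.

Lemma sum_good A s : good A s -> \sum_(j <- s) x j = \sum_(j in A) x j.
Proof.
move=> /and3P[us /forallP hm _]; rewrite big_uniq //; apply: eq_bigl => i.
exact: (eqP (hm i)).
Qed.

Lemma main_lemma m (A : {set 'I_n}) : downset le A -> #|A| = m ->
  \sum_(s <- allseqs m | good A s) G s = \prod_(i in A) (xdown le x i)^-1.
Proof.
elim: m A => [|m IH] A hA hc.
  move/cards0_eq: hc => ->; rewrite big_set0 /= big_cons big_nil.
  have -> : good set0 [::].
    by rewrite /good /valid /= andbT; apply/forallP => i; rewrite in_set0.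
  by rewrite /G big_ord0 addr0.
have [r0 hr0] : exists r, r \in A by apply/card_gt0P; rewrite hc.
set xA := \sum_(j in A) x j.
have xA0 : xA != 0 by rewrite gt_eqF // (sumset_pos xpos hr0).
set P := \prod_(i in A) (xdown le x i)^-1.
rewrite /= big_mkcond big_allpairs_dep /= exchange_big /=.
have E : forall r, \sum_(s <- allseqs m)
   (if good A (rcons s r) then G (rcons s r) else 0) =
   (if maxA le A r then xdown le x r * (P / xA) else 0).
  move=> r; under eq_bigr => s _ do rewrite good_rcons.
  case: (boolP (maxA le A r)) => hm /=; last by rewrite big1.
  have hr : r \in A by case/andP: hm.
  rewrite -big_mkcond /=.
  transitivity (\sum_(s <- allseqs m | good (A :\ r) s) G s * xA^-1).
    apply: eq_bigr => s hs; rewrite G_rcons; congr (_ * _ ^-1).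
    rewrite -cats1 big_cat big_seq1 /= (sum_good hs) /xA [RHS](bigD1 r) //=.
    rewrite addrC; congr (_ + _); apply: eq_bigl => j; by rewrite in_setD1 andbC.
  rewrite -big_distrl /= IH; last first.
  - by move: hc; rewrite (cardsD1 r) hr add1n => -[].
  - exact: downset_D1.
  rewrite /P [in RHS](bigD1 r) //=.
  have -> : \prod_(i in A :\ r) (xdown le x i)^-1 =
    \prod_(i in A | i != r) (xdown le x i)^-1.
    by apply: eq_bigl => j; rewrite in_setD1 andbC.
  have d0 : xdown le x r != 0 by rewrite gt_eqF // (xdown_pos Hf xpos).
  by field; rewrite xA0 d0.
rewrite (eq_bigr _ (fun r _ => E r)).
rewrite -big_mkcond /= -big_distrl /= (@sum_max _ _ Hf Hn _ x A hA) /xA.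
by rewrite mulrCA mulfV // mulr1.
Qed.

End Main.
Lemma pairwise_enum n (r : rel 'I_n) :
  pairwise r (enum 'I_n) = [forall i : 'I_n, forall j : 'I_n, (i < j)%N ==> r i j].
Proof.
case: n r => [|n] r.
  have -> : enum 'I_0 = [::] by apply/size0nil; rewrite size_enum_ord.
  by apply/esym/forallP => -[].
apply/(pairwiseP ord0)/forallP => H.
  move=> i; apply/forallP => j; apply/implyP => hij.
  have := H i j; rewrite !inE size_enum_ord !nth_ord_enum; apply => //.
move=> i j; rewrite !inE size_enum_ord => hi hj hij.
have -> : nth ord0 (enum 'I_n.+1) i = Ordinal hi.
  by apply: val_inj; rewrite /= nth_enum_ord.
have -> : nth ord0 (enum 'I_n.+1) j = Ordinal hj.
  by apply: val_inj; rewrite /= nth_enum_ord.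
exact: (implyP (forallP (H (Ordinal hi)) (Ordinal hj)) hij).
Qed.

Lemma take_enum n (i : 'I_n) :
  take i.+1 (enum 'I_n) = [seq k : 'I_n <- enum 'I_n | (k <= i)%N].
Proof.
apply: (inj_map val_inj).
rewrite map_take val_enum_ord take_iota (minn_idPl (ltn_ord i)).
by rewrite -(filter_iota_leq 0 (ltn_ord i)) -val_enum_ord filter_map.
Qed.

Section Top.
Variables (n : nat) (le : rel 'I_n).
Hypothesis (Hf : rooted_forest le) (Hn : natural_labeling le).
Local Open Scope ring_scope.
Variables (R : realFieldType) (x : 'I_n -> R).
Hypothesis xpos : forall i, 0 < x i.

Definition h (pi : {perm 'I_n}) := [seq pi i | i <- enum 'I_n].

Lemma G_h pi : G x (h pi) = \prod_(i : 'I_n) (\sum_(k : 'I_n | (k <= i)%N) x (pi k))^-1.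
Proof.
rewrite /G /h size_map size_enum_ord; apply: eq_bigr => i _; congr (_^-1).
by rewrite -map_take big_map take_enum big_filter big_enum_cond.
Qed.

Lemma psum (F : 'I_n -> R) (P : pred 'I_n) i :
  (forall j, 0 < F j) -> P i -> 0 < \sum_(j | P j) F j.
Proof.
move=> Fp Pi; rewrite (bigD1 i) //=.
have := Fp i; have : 0 <= \sum_(j | P j && (j != i)) F j.
  by apply: sumr_ge0 => j _; apply: ltW.
lra.
Qed.

Lemma xprefix_pos i : 0 < xprefix x i.
Proof.
rewrite /xprefix (bigD1 i) ?leqnn //=.
have := xpos i; have : 0 <= \sum_(j : 'I_n | (j <= i)%N && (j != i)) x j.
  by apply: sumr_ge0 => j _; apply: ltW.
lra.
Qed.

Lemma Zw pi : Z_P le x * w_pi x pi = (\prod_i xdown le x i) * G x (h pi).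
Proof.
rewrite G_h /Z_P /w_pi -!big_split /=; apply: eq_bigr => i _.
have := xprefix_pos i => /gt_eqF p0.
have : 0 < \sum_(k < n | (k <= i)%N) x (pi k).
  by apply: psum => //= j; apply: xpos.
move=> /gt_eqF s0.
by field; rewrite p0 s0.
Qed.

Lemma nth_h pi (i : 'I_n) : nth i (h pi) i = pi i.
Proof.
rewrite /h (nth_map i); last by rewrite size_enum_ord.
congr (pi _); exact: nth_ord_enum.
Qed.

Lemma h_inj : injective h.
Proof.
move=> p1 p2 e; apply/permP => i.
have E1 : nth i (h p1) i = nth i (h p2) i by rewrite e.
by move: E1; rewrite !nth_h.
Qed.

Lemma good_h pi : good le setT (h pi) = (pi \in linext le).
Proof.
rewrite /good /h map_inj_uniq ?enum_uniq //=; last exact: perm_inj.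
have -> : [forall i, (i \in [seq pi i | i <- enum 'I_n]) == (i \in [set: 'I_n])].
  apply/forallP => i; rewrite in_setT; apply/eqP/mapP.
  by exists (pi^-1 i)%g; rewrite ?mem_enum ?permKV.
rewrite /valid pairwise_map pairwise_enum inE /=.
apply/forallP/forallP => H a.
  apply/forallP => b; apply/implyP => hab.
  rewrite ltnNge leq_eqVlt negb_or; apply/andP; split.
    apply/negP => /eqP /val_inj e.
    by move: hab; rewrite -(permKV pi a) -(permKV pi b) e strictE eqxx andbF.
  apply/negP => hlt.
  have := implyP (forallP (H (pi^-1 b)%g) (pi^-1 a)%g) hlt.
  by rewrite !permKV hab.
apply/forallP => b; apply/implyP => hab; apply/negP => hs.
have := implyP (forallP (H (pi b)) (pi a)) hs.
by rewrite !permK ltnNge ltnW.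
Qed.

Lemma allseqs_uniq m : uniq (allseqs n m).
Proof.
elim: m => [|m IH] //=.
apply: allpairs_uniq => //; first exact: index_enum_uniq.
by move=> [s1 r1] [s2 r2] _ _ /= /rcons_inj [-> ->].
Qed.

Lemma mem_allseqs m s : (s \in allseqs n m) = (size s == m).
Proof.
elim: m s => [|m IH] s /=; first by rewrite inE; case: s.
apply/allpairsP/idP.
  by move=> [[s' r] [hs' _ ->]] /=; rewrite size_rcons eqSS -IH.
case/lastP: s => [|s' r] //; rewrite size_rcons eqSS => hs.
by exists (s', r); rewrite IH hs mem_index_enum.
Qed.

Lemma surj_h s : size s = n -> good le setT s -> exists pi, s = h pi.
Proof.
move=> hs /and3P[us _ _].
have finj : injective (fun i : 'I_n => nth i s i).
  move=> i j /= e; apply: val_inj; apply/eqP.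
  have hi : (i < size s)%N by rewrite hs ltn_ord.
  have hj : (j < size s)%N by rewrite hs ltn_ord.
  by rewrite -(nth_uniq i hi hj us) e (set_nth_default i j).
pose pi := perm finj.
have piE : forall i, pi i = nth i s i by move=> i; rewrite permE.
exists pi; clearbody pi; clear finj.
case E: s => [|x0 s'].
  by apply/esym/size0nil; rewrite /h size_map size_enum_ord -hs E.
rewrite -E; apply: (@eq_from_nth _ x0); first by rewrite size_map size_enum_ord.
move=> k hk; have hk' : (k < n)%N by rewrite -hs.
rewrite /h (nth_map x0) ?size_enum_ord // piE.
rewrite (set_nth_default x0) ?nth_enum_ord -?hs //.
Qed.

End Top.

Local Open Scope ring_scope.
Theorem theorem5p1 (R : realFieldType) (n : nat) (le : rel 'I_n) (x : 'I_n -> R) :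
  rooted_forest le -> natural_labeling le -> (forall i, 0 < x i) ->
  \sum_(pi in linext le) Z_P le x * w_pi x pi = 1.
Proof.
move=> Hf Hn xpos.
rewrite (eq_bigr _ (fun pi _ => Zw le xpos pi)) -mulr_sumr.
have Hperm : perm_eq (map (@h n) (enum (linext le)))
                     (filter (good le setT) (allseqs n n)).
  apply: uniq_perm.
  - by rewrite map_inj_uniq ?enum_uniq //; exact: h_inj.
  - by rewrite filter_uniq // allseqs_uniq.
  move=> s; apply/mapP/idP.
    move=> [pi hpi ->]; rewrite mem_filter good_h -mem_enum hpi /=.
    by rewrite mem_allseqs /h size_map size_enum_ord.
  rewrite mem_filter mem_allseqs => /andP[hg /eqP hs].
  case: (surj_h hs hg) => pi e; exists pi => //.
  by rewrite mem_enum -good_h -e.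
transitivity ((\prod_i xdown le x i) *
   \sum_(s <- map (@h n) (enum (linext le))) G x s).
  by rewrite big_map big_enum.
rewrite (perm_big _ Hperm) big_filter (main_lemma Hf Hn xpos); last first.
- by rewrite cardsT card_ord.
- by move=> i j _ _; rewrite in_setT.
have -> : \prod_(i in [set: 'I_n]) (xdown le x i)^-1 = \prod_i (xdown le x i)^-1.
  by apply: eq_bigl => i; rewrite in_setT.
rewrite -big_split /= big1 // => i _.
by rewrite mulfV // gt_eqF // (xdown_pos Hf xpos).
Qed.
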